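(* Let $q\ge 2$ and $n\ge 2$. If there is an ordering of all words of $\mathbb{Z}_q^{n-1}$ in which consecutive words have Hamming distance $1$, starting with $(0,\ldots,0)$ and ending with $(1,\ldots,1)$, then a quasi-complementary Hamming metric Gray code of $q$-ary $n$-tuples exists. Likewise, if there is such an ordering of $\mathbb{Z}_q^{n-1}$ in which consecutive words have Lee distance $1$, starting with $(0,\ldots,0)$ and ending with $(1,\ldots,1)$, then a quasi-complementary Lee metric Gray code of $q$-ary $n$-tuples exists.
   Context: Hamming distance between two words is the number of coordinates in which they differ. Lee distance between $v,u\in\mathbb{Z}_q^n$ is $\sum_{i}\min\{|v_i-u_i|,q-|v_i-u_i|\}$ (entries regarded as integers in $\{0,\ldots,q-1\}$). A quasi-complementary Hamming (resp. Lee) metric Gray code of $q$-ary $n$-tuples is an ordering $G(0),\ldots,G(q^n-1)$ of all words of $\mathbb{Z}_q^n$ such that consecutive words $G(i),G(i+1)$ ($0\le i<q^n-1$) have Hamming (resp. Lee) distance $1$, and $G((i+q^{n-1})\bmod q^n)=G(i)+(1,1,\ldots,1)$ for all $i$, with addition in $\mathbb{Z}_q^n$. *)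

(* Defs.v *)
From mathcomp Require Import all_boot all_order all_algebra.
Set Implicit Arguments. Unset Strict Implicit. Unset Printing Implicit Defensive.
Import GRing.Theory.
Local Open Scope ring_scope.

Definition word (q n : nat) := 'rV['Z_q]_n.

Definition hamming (q n : nat) (v u : word q n) : nat :=
  #|[set i : 'I_n | v ord0 i != u ord0 i]|.

Definition lee_coord {q : nat} (a b : 'Z_q) : nat :=
  let d := `|(nat_of_ord a : int) - (nat_of_ord b : int)|%N in minn d (q - d)%N.

Definition lee (q n : nat) (v u : word q n) : nat :=
  (\sum_(i < n) lee_coord (q:=q) (v ord0 i) (u ord0 i))%N.

Definition is_ordering (q n : nat) (s : seq (word q n)) : Prop :=
  uniq s /\ forall w : word q n, w \in s.

Definition consec_dist1 (q n : nat) (d : word q n -> word q n -> nat)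
  (s : seq (word q n)) : Prop :=
  forall i : nat, (i.+1 < size s)%N -> d (nth 0 s i) (nth 0 s i.+1) = 1%N.

Definition quasi_compl_gray (q n : nat) (d : word q n -> word q n -> nat)
  (s : seq (word q n)) : Prop :=
  is_ordering s /\ consec_dist1 d s /\
  forall i : nat, (i < q ^ n)%N ->
    nth 0 s ((i + q ^ n.-1) %% q ^ n) = nth 0 s i + const_mx 1.

(* Main.v *)
Require Import Defs.
From mathcomp Require Import all_boot all_order all_algebra.
From mathcomp Require Import zify.
Import GRing.Theory.
Local Open Scope ring_scope.

Section Constr.
Variables p m : nat.
Local Notation Q := p.+2.
Local Notation L := (Q ^ m)%N.

Definition cst k (j : nat) : 'rV['Z_Q]_k := const_mx (j%:R).

Definition GG (s : seq (word Q m)) (j i : nat) : word Q m.+1 :=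
  row_mx (cst 1 j) (nth 0 s i + cst m j).

Definition gg s := mkseq (fun k => GG s (k %/ L) (k %% L)) (Q * L).

Lemma cst_inj k j j' : (0 < k)%N -> (j < Q)%N -> (j' < Q)%N -> cst k j = cst k j' -> j = j'.
Proof.
move=> k0 hj hj' /matrixP /(_ ord0 (Ordinal k0)); rewrite !mxE => /(congr1 val).
by rewrite /= !val_Zp_nat // !modn_small.
Qed.

Lemma cstS k j : cst k j.+1 = cst k j + const_mx 1.
Proof. by apply/matrixP => a b; rewrite !mxE mulrSr. Qed.

Lemma cstQ k : cst k Q = cst k 0.
Proof. by apply/matrixP => a b; rewrite !mxE pchar_Zp. Qed.

Lemma GG_shift0 s j i : (GG s j.+1 i : 'M_(1, 1 + m)) = (GG s j i : 'M_(1, 1 + m)) + const_mx 1.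
Proof.
rewrite /GG -(row_mx_const 1 1 m (1 : 'Z_Q)) add_row_mx.
by rewrite !cstS addrA.
Qed.

Lemma GG_shift s j i : GG s j.+1 i = GG s j i + const_mx 1.
Proof. exact: GG_shift0.
Qed.

Lemma divmodL j i : (i < L)%N -> ((j * L + i) %/ L = j /\ (j * L + i) %% L = i)%N.
Proof.
have L0 : (0 < L)%N by rewrite expn_gt0.
move=> hi; rewrite divnMDl // divn_small // addn0 modnMDl modn_small //.
Qed.

Arguments divmodL j {i}.

Lemma main s (d1 : 'M['Z_Q]_(1,1) -> 'M['Z_Q]_(1,1) -> nat)
  (dm : word Q m -> word Q m -> nat) (dn : word Q m.+1 -> word Q m.+1 -> nat) :
  (forall (a b : 'M['Z_Q]_(1,1)) (v u : word Q m), dn (row_mx a v) (row_mx b u) = d1 a b + dm v u)%N ->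
  (forall a, d1 a a = 0%N) -> (forall v, dm v v = 0%N) ->
  (forall v u w, dm (v + w) (u + w) = dm v u) ->
  (forall j, j.+1 < Q -> d1 (cst 1 j) (cst 1 j.+1) = 1)%N ->
  is_ordering s -> consec_dist1 dm s -> head 0 s = 0 -> last 0 s = const_mx 1 ->
  quasi_compl_gray dn (gg s).
Proof.
move=> hsplit h1 hm htr hstep [us alls] hcons hh hl.
have L0 : (0 < L)%N by rewrite expn_gt0.
have sz : size s = L.
  rewrite -(card_uniqP us).
  have -> : #|s| = #|{: 'M['Z_Q]_(1,m)}| by apply: eq_card => w; rewrite alls.
  by rewrite card_mx card_ord mul1n.
have dec k : (k < Q * L)%N -> [/\ k = (k %/ L) * L + k %% L, (k %/ L < Q) & (k %% L < L)]%N.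
  move=> hk; split; first exact: divn_eq.
    by rewrite ltn_divLR // mulnC.
  exact: ltn_pmod.
split; [split|split].
- apply/mkseq_uniqP => k k'; rewrite !inE /= => hk hk' e.
  have [ek hj hi] := dec _ hk; have [ek' hj' hi'] := dec _ hk'.
  rewrite /GG in e; have [e1 e2] := @eq_row_mx _ 1 1 m _ _ _ _ e.
  have ej := @cst_inj 1 _ _ isT hj hj' e1.
  move: e2; rewrite ej => /addIr /eqP; rewrite nth_uniq ?sz // => /eqP ei.
  by rewrite ek ek' ej ei.
- move=> w.
  have hw := hsubmxK (w : 'M_(1, 1 + m)).
  set a := lsubmx _ in hw; set v := rsubmx _ in hw.
  set j := nat_of_ord (a ord0 ord0).
  have ha : a = cst 1 j.
    by apply/matrixP => x y; rewrite [x]ord1 [y]ord1 [RHS]mxE natr_Zp.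
  have : v - cst m j \in s by rewrite alls.
  move=> /(nthP (0 : word Q m)) [i hi ei]; rewrite sz in hi.
  have hj : (j < Q)%N by apply: ltn_ord.
  apply/(nthP 0); exists (j * L + i)%N.
    rewrite size_mkseq; nia.
  rewrite nth_mkseq; last by nia.
  have [-> ->] := divmodL j hi.
  by rewrite /GG ei subrK -ha hw.
- move=> k; rewrite size_mkseq => hk.
  rewrite !nth_mkseq //; last exact: ltnW.
  have [ek hj hi] := dec _ (ltnW hk).
  move: (k %/ L)%N (k %% L)%N ek hj hi hk => j i -> hj hi hk.
  have [hi1|hi1] := ltnP i.+1 L.
    have -> : (j * L + i).+1 = (j * L + i.+1)%N by rewrite addnS.
    have [-> ->] := divmodL j hi1; by rewrite /GG hsplit h1 add0n htr hcons ?sz.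
  have eiL : i.+1 = L by lia.
  have -> : (j * L + i).+1 = (j.+1 * L + 0)%N by rewrite addn0 mulSn -addnS eiL addnC.
  have hj1 : (j.+1 < Q)%N.
    by nia.
  have [-> ->] := divmodL j.+1 L0.
  rewrite /GG hsplit hstep //.
  have -> : nth 0 s i = const_mx 1 by rewrite -hl -nth_last sz -eiL.
  by rewrite nth0 hh add0r cstS addrC hm.
- move=> k; rewrite expnS /= => hk.
  have [ek hj hi] := dec _ hk.
  rewrite [nth _ _ k]nth_mkseq //.
  move: (k %/ L)%N (k %% L)%N ek hj hi hk => j i -> hj hi hk.
  have [hj1|hj1] := ltnP j.+1 Q.
    rewrite (modn_small (m := (j * L + i + L)%N)); last by nia.
    have -> : (j * L + i + L = j.+1 * L + i)%N by rewrite mulSn; lia.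
    rewrite nth_mkseq; last by nia.
    have [-> ->] := divmodL j.+1 hi.
    exact: GG_shift.
  have eQ : j.+1 = Q by lia.
  have -> : (j * L + i + L = Q * L + i)%N by rewrite -eQ mulSn; lia.
  rewrite modnDl modn_small; last by nia.
  rewrite nth_mkseq; last by nia.
  have := divmodL 0 hi; rewrite mul0n add0n => -[-> ->].
  rewrite -GG_shift eQ /GG.
  by rewrite !cstQ.
Qed.


Lemma hamE k (v u : word Q k) :
  hamming v u = (\sum_(i < k) (v ord0 i != u ord0 i : nat))%N.
Proof.
rewrite /hamming -sum1_card big_mkcond /=; apply: eq_bigr => i _.
by rewrite inE; case: (_ != _).
Qed.

Lemma ham_split (a b : 'M['Z_Q]_(1,1)) (v u : word Q m) :
  hamming (row_mx a v : 'M_(1, 1 + m)) (row_mx b u) = (hamming a b + hamming v u)%N.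
Proof.
rewrite !hamE big_split_ord /=; congr addn; apply: eq_bigr => i _.
  by rewrite !row_mxEl.
by rewrite !row_mxEr.
Qed.

Lemma ham0 k (v : word Q k) : hamming v v = 0%N.
Proof. by rewrite hamE big1 // => i _; rewrite eqxx. Qed.

Lemma hamT k (v u w : word Q k) : hamming (v + w) (u + w) = hamming v u.
Proof. by rewrite !hamE; apply: eq_bigr => i _; rewrite !mxE (inj_eq (addIr _)). Qed.

Lemma natZ_neq j : (j.+1 < Q)%N -> (j%:R : 'Z_Q) != j.+1%:R.
Proof.
move=> hj; apply/eqP => /(congr1 val); rewrite /= !val_Zp_nat // !modn_small //.
- lia.
- exact: ltnW.
Qed.

Lemma hamS j : (j.+1 < Q)%N -> hamming (cst 1 j) (cst 1 j.+1) = 1%N.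
Proof. by move=> hj; rewrite hamE big_ord1 !mxE natZ_neq. Qed.

Lemma leeE k (v u : word Q k) :
  lee v u = (\sum_(i < k) lee_coord (v ord0 i) (u ord0 i))%N.
Proof. by []. Qed.

Lemma lee_split (a b : 'M['Z_Q]_(1,1)) (v u : word Q m) :
  lee (row_mx a v : 'M_(1, 1 + m)) (row_mx b u) = (lee a b + lee v u)%N.
Proof.
rewrite !leeE big_split_ord /=; congr addn; apply: eq_bigr => i _.
  by rewrite !row_mxEl.
by rewrite !row_mxEr.
Qed.

Lemma lee0 k (v : word Q k) : lee v v = 0%N.
Proof. by rewrite leeE big1 // => i _; rewrite /lee_coord; lia. Qed.

Lemma modQ x : (x < Q + Q)%N -> (x %% Q = if x < Q then x else x - Q)%N.
Proof.
move=> h; case: ltnP => h2; first by rewrite modn_small.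
by rewrite -{1}(subnK h2) modnDr modn_small //; lia.
Qed.

Lemma lee_coordT (a b c : 'Z_Q) : lee_coord (a + c) (b + c) = lee_coord a b.
Proof.
rewrite /lee_coord.
have ha : (a < Q)%N := ltn_ord a.
have hb : (b < Q)%N := ltn_ord b.
have hc : (c < Q)%N := ltn_ord c.
have -> : nat_of_ord (a + c) = ((a + c) %% Q)%N by [].
have -> : nat_of_ord (b + c) = ((b + c) %% Q)%N by [].
rewrite !modQ; try lia.
by case: ltnP => h1; case: ltnP => h2; lia.
Qed.

Lemma leeT k (v u w : word Q k) : lee (v + w) (u + w) = lee v u.
Proof. by rewrite !leeE; apply: eq_bigr => i _; rewrite !mxE lee_coordT. Qed.

Lemma leeS j : (j.+1 < Q)%N -> lee (cst 1 j) (cst 1 j.+1) = 1%N.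
Proof.
move=> hj; rewrite leeE big_ord1 !mxE /lee_coord /= !val_Zp_nat // !modn_small //.
- lia.
- exact: ltnW.
Qed.

End Constr.


Theorem lemma2 (q n : nat) (hq : (2 <= q)%N) (hn : (2 <= n)%N) :
  ((exists s : seq (word q n.-1),
      [/\ is_ordering s, consec_dist1 (@hamming q n.-1) s,
          head 0 s = 0 & last 0 s = const_mx 1]) ->
   exists g : seq (word q n), quasi_compl_gray (@hamming q n) g)
  /\
  ((exists s : seq (word q n.-1),
      [/\ is_ordering s, consec_dist1 (@lee q n.-1) s,
          head 0 s = 0 & last 0 s = const_mx 1]) ->
   exists g : seq (word q n), quasi_compl_gray (@lee q n) g).
Proof.
case: q hq => [|[|p]] // _; case: n hn => [|m] // _.
split => -[s [ho hc hh hl]]; exists (@gg p m s).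
  apply: (@main p m s (@hamming _ 1) (@hamming _ m) (@hamming _ m.+1)) => //.
  - exact: ham_split.
  - exact: ham0.
  - exact: ham0.
  - exact: hamT.
  - exact: hamS.
apply: (@main p m s (@lee _ 1) (@lee _ m) (@lee _ m.+1)) => //.
- exact: lee_split.
- exact: lee0.
- exact: lee0.
- exact: leeT.
- exact: leeS.
Qed.
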